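(* Let $q$ be a prime power and let $f,g:\mathbb{N}\to\mathbb{C}$ be functions, neither identically zero, such that \[ g(n)=\sum_{k=1}^{n}\binom{n-1}{k-1}_q f(k)\quad\text{for all } n\in\mathbb{N}. \] Then at least one of $\{n: f(n)\neq0\}$ and $\{n:g(n)\neq 0\}$ is infinite.
   Context: The $q$-binomial coefficient is $\binom{n}{k}_q=\frac{[n]!_q}{[k]!_q[n-k]!_q}$ where $[n]!_q=\prod_{d=1}^n\frac{q^d-1}{q-1}$. *)

(* Defs.v *)
From mathcomp Require Import all_boot all_order all_algebra.
From mathcomp Require Import complex reals.
Set Implicit Arguments. Unset Strict Implicit. Unset Printing Implicit Defensive.
Import GRing.Theory Num.Theory.
Local Open Scope ring_scope.

Definition qint (R : realType) (q d : nat) : R[i] := ((q%:R ^+ d - 1) / (q%:R - 1)).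

Definition qfact (R : realType) (q n : nat) : R[i] := \prod_(1 <= d < n.+1) qint R q d.

Definition qbinom (R : realType) (q n k : nat) : R[i] :=
  qfact R q n / (qfact R q k * qfact R q (n - k)%N).

Definition prime_power (q : nat) : Prop :=
  exists p e : nat, [/\ prime p, (0 < e)%N & q = (p ^ e)%N].

(* Main.v *)
Require Import Defs.
From mathcomp Require Import all_boot all_order all_algebra.
From mathcomp Require Import complex reals.
Import GRing.Theory Num.Theory.
Local Open Scope ring_scope.
From mathcomp Require Import ring zify.
From Stdlib Require Import Classical.

Section Q.
Variables (F : fieldType) (x : F).
Hypothesis x0 : x != 0.
Hypothesis xd : forall d, (0 < d)%N -> x ^+ d != 1.

Definition gint d : F := (x ^+ d - 1) / (x - 1).
Definition gfact n : F := \prod_(1 <= d < n.+1) gint d.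
Definition gbinom n k : F := gfact n / (gfact k * gfact (n - k)%N).

Lemma x1_neq0 : x - 1 != 0.
Proof. by rewrite subr_eq0; have := xd 1 isT; rewrite expr1. Qed.

Lemma gint_neq0 d : (0 < d)%N -> gint d != 0.
Proof.
move=> d0; rewrite /gint mulf_eq0 invr_eq0 negb_or x1_neq0 andbT.
by rewrite subr_eq0 xd.
Qed.

Lemma gfact_neq0 n : gfact n != 0.
Proof.
rewrite /gfact prodf_seq_neq0; apply/allP => d; rewrite mem_index_iota => /andP[d1 _]; exact: gint_neq0.
Qed.

Lemma gfact_split m j : (j <= m)%N ->
  gfact m = gfact (m - j) * \prod_(i < j) gint (m - i).
Proof.
elim: j => [|j IH] jm; first by rewrite big_ord0 mulr1 subn0.
have e : gfact (m - j) = gfact (m - j.+1) * gint (m - j).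
  have -> : (m - j = (m - j.+1).+1)%N by rewrite subnSK.
  by rewrite /gfact big_nat_recr //= subnSK.
rewrite IH ?(ltnW jm) // big_ord_recr /= e; ring.
Qed.

Lemma gbinom_prod m j : (j <= m)%N ->
  gbinom m j = (\prod_(i < j) gint (m - i)) / gfact j.
Proof.
move=> jm; rewrite /gbinom (@gfact_split m j jm).
have h := gfact_neq0 (m - j); have h2 := gfact_neq0 j.
move: h h2; set P := \prod_(i < j) _; set a := gfact (m - j); set b := gfact j => h h2.
by rewrite (mulrC b) invfM mulrA (mulrC a) mulfK.
Qed.

Definition Lp (i : nat) : {poly F} :=
  (x ^- i / (x - 1)) *: 'X - ((x - 1)^-1)%:P.

Lemma Lp_eval i m : (i <= m)%N -> (Lp i).[x ^+ m] = gint (m - i).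
Proof.
move=> im; rewrite /Lp /gint hornerD hornerN hornerZ hornerX hornerC.
rewrite -(subnK im) exprD subnK //.
have h1 := x1_neq0; have h2 : x ^+ i != 0 by rewrite expf_neq0.
field; by rewrite h1 h2.
Qed.

Lemma Lp_size i : size (Lp i) = 2%N.
Proof.
have c0 : x ^- i / (x - 1) != 0.
  by rewrite mulf_neq0 ?invr_eq0 ?x1_neq0 // expf_neq0.
rewrite /Lp size_polyDl size_scale ?size_polyX //.
by rewrite size_polyN size_polyC; case: (_ != 0).
Qed.

Definition Qp (j : nat) : {poly F} := (gfact j)^-1 *: \prod_(i < j) Lp i.

Lemma Qp_eval j m : (j <= m)%N -> (Qp j).[x ^+ m] = gbinom m j.
Proof.
move=> jm; rewrite /Qp hornerZ horner_prod gbinom_prod // mulrC.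
congr (_ * _); apply: eq_bigr => i _; apply: Lp_eval.
exact: leq_trans (ltnW (ltn_ord i)) jm.
Qed.

Lemma Qp_size j : size (Qp j) = j.+1.
Proof.
rewrite /Qp size_scale ?invr_eq0 ?gfact_neq0 // size_prod; last by move=> i _; rewrite -size_poly_eq0 Lp_size.
under eq_bigr do rewrite Lp_size.
rewrite sum_nat_const cardT size_enum_ord.
by rewrite muln2 -addnn -addSn addnK.
Qed.

Lemma Qp_coef j : (Qp j)`_j != 0.
Proof.
have -> : (Qp j)`_j = lead_coef (Qp j) by rewrite lead_coefE Qp_size.
by rewrite lead_coef_eq0 -size_poly_eq0 Qp_size.
Qed.


Lemma xexp_inj m n : x ^+ m = x ^+ n -> m = n.
Proof.
move=> e; case: (ltngtP m n) => // lt; exfalso.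
  have := xd (n - m); rewrite subn_gt0 lt => /(_ isT).
  by rewrite (expfB _ lt) e divff ?eqxx ?expf_neq0.
have := xd (m - n); rewrite subn_gt0 lt => /(_ isT).
by rewrite (expfB _ lt) e divff ?eqxx ?expf_neq0.
Qed.

Lemma core (a : nat -> F) K B : a K.+1 != 0 ->
  (forall k, (K.+1 < k)%N -> a k = 0) ->
  (forall m, (B <= m)%N -> \sum_(1 <= k < m.+2) gbinom m k.-1 * a k = 0) -> False.
Proof.
move=> aK az hz.
pose P := \sum_(1 <= k < K.+2) a k *: Qp k.-1.
have PK : P`_K != 0.
  rewrite /P coef_sum big_nat_recr //= coefZ big1_seq ?add0r ?mulf_neq0 ?Qp_coef //.
  move=> k /andP[_]; rewrite mem_index_iota => /andP[k1 kK].
  by rewrite coefZ nth_default ?mulr0 // Qp_size prednK.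
have P0 : P != 0 by apply: contraNneq PK => ->; rewrite coef0.
have Ps : (size P <= K.+1)%N.
  apply/leq_sizeP => j Kj; rewrite /P coef_sum big1_seq // => k /andP[_].
  rewrite mem_index_iota => /andP[k1 kK].
  rewrite coefZ nth_default ?mulr0 // Qp_size prednK //.
  rewrite ltnS in kK; exact: leq_trans kK Kj.
have Pev : forall m, (B + K <= m)%N -> P.[x ^+ m] = 0.
  move=> m Bm; rewrite -(hz m (leq_trans (leq_addr _ _) Bm)).
  have Km : (K <= m)%N by exact: leq_trans (leq_addl _ _) Bm.
  have KM : (K.+2 <= m.+2)%N by rewrite !ltnS.
  rewrite /P horner_sum [RHS](big_cat_nat (n := K.+2) _ KM) //=.
  rewrite [X in _ = _ + X]big1_seq ?addr0; last first.
    by move=> l /andP[_]; rewrite mem_index_iota => /andP[lK _]; rewrite az ?mulr0.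
  apply: eq_big_nat => k /andP[k1 kK].
  rewrite hornerZ Qp_eval 1?mulrC //.
  rewrite -ltnS prednK //; exact: leq_trans kK KM.
pose rs := [seq x ^+ (B + K + i) | i <- iota 0 K.+2].
have := max_poly_roots P0 (rs := rs).
rewrite size_map size_iota.
have -> : all (root P) rs.
  by apply/allP => y /mapP[i _ ->]; apply/rootP; apply: Pev; apply: leq_addr.
have -> : uniq rs.
  rewrite map_inj_uniq ?iota_uniq // => i j /xexp_inj /addnI //.
move=> /(_ isT isT) h; have := leq_trans h Ps.
by rewrite ltnS ltnNge leqnSn.
Qed.

End Q.

Theorem proposition5p2 (R : realType) (q : nat) (f g : nat -> R[i]) :
  prime_power q ->
  (exists2 n : nat, (0 < n)%N & f n != 0) ->
  (exists2 n : nat, (0 < n)%N & g n != 0) ->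
  (forall n : nat, (0 < n)%N ->
     g n = \sum_(1 <= k < n.+1) qbinom R q n.-1 k.-1 * f k) ->
  (forall m : nat, exists2 n : nat, (m < n)%N & f n != 0) \/
  (forall m : nat, exists2 n : nat, (m < n)%N & g n != 0).
Proof.
move=> [p [e [pp e0 qe]]] [n0 n0p fn0] _ hg.
have q2 : (1 < q)%N by rewrite qe -(exp1n e) ltn_exp2r ?prime_gt1.
case: (classic (forall m, exists2 n, (m < n)%N & f n != 0)) => [H|Hf]; [by left| right].
move=> m; apply: NNPP => Hg.
have gz : forall n, (m < n)%N -> g n = 0.
  move=> n mn; case: (eqVneq (g n) 0) => // gn; exfalso; apply: Hg; by exists n.
have [mf Hmf] : exists M, forall n, (M < n)%N -> f n = 0.
  apply: NNPP => H'; apply: Hf => m'; apply: NNPP => H2; apply: H'; exists m' => n mn.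
  by case: (eqVneq (f n) 0) => // hn; exfalso; apply: H2; exists n.
have exP : exists i, (0 < i)%N && (f i != 0) by exists n0; rewrite n0p fn0.
have ubP : forall i, (0 < i)%N && (f i != 0) -> (i <= mf)%N.
  move=> i /andP[_ fi]; rewrite leqNgt; apply/negP => /Hmf /eqP.
  by rewrite (negbTE fi).
case: (ex_maxnP exP ubP) => K /andP[K0 fK] Kmax.
case: K K0 fK Kmax => // K' _ fK Kmax.
have x0 : (q%:R : R[i]) != 0 by rewrite pnatr_eq0 -lt0n ltnW.
have xd : forall d, (0 < d)%N -> (q%:R : R[i]) ^+ d != 1.
  move=> d d0; rewrite -natrX; suff: ((q ^ d)%:R : R[i]) != 1%:R by [].
  rewrite eqr_nat neq_ltn; apply/orP; right.
  by rewrite -(exp1n d) ltn_exp2r.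
apply: (@core _ _ x0 xd f K' m fK).
  move=> k Kk; case: (eqVneq (f k) 0) => // fk; exfalso.
  have : (0 < k)%N && (f k != 0) by rewrite fk andbT (leq_ltn_trans (leq0n _) Kk).
  by move=> /Kmax; rewrite leqNgt Kk.
move=> m' mm'; have h := hg m'.+1 isT; rewrite gz // in h.
Qed.
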